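(* Let $R$ be a $*$-ring, let $a\in R$, and let $n\geq 2$ be an integer. Then $a$ is core invertible if and only if there exists $b\in {}^{\circ}a$ such that $u=a^{n}+b^{*}b$ is invertible. In this case $$a^{\mathrm{core}}=a^{n-1}u^{-1}.$$
   Context: A $*$-ring is an associative ring with identity $1$ and an involution $*$, i.e. $(a^* )^*=a$, $(ab)^*=b^*a^*$ and $(a+b)^*=a^*+b^*$. For $a\in R$, ${}^{\circ}a=\{x\in R : xa=0\}$. An element $a$ is core invertible if there is $x\in R$ with $(ax)^*=ax$, $ax^2=x$ and $xa^2=a$. Such an $x$ is unique and denoted $a^{\mathrm{core}}$. ''Invertible'' means having a two-sided inverse in $R$. *)

(* Defs.v *)
From HB Require Import structures.
From mathcomp Require Import all_boot all_order all_algebra.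
Set Implicit Arguments. Unset Strict Implicit. Unset Printing Implicit Defensive.
Import GRing.Theory.
Local Open Scope ring_scope.

Definition is_involution (R : pzRingType) (star : R -> R) : Prop :=
  [/\ forall a, star (star a) = a,
      forall a b, star (a * b) = star b * star a &
      forall a b, star (a + b) = star a + star b].

Definition is_inverse (R : pzRingType) (u v : R) : Prop := u * v = 1 /\ v * u = 1.

Definition invertible (R : pzRingType) (u : R) : Prop := exists v, is_inverse u v.

Definition is_core_inverse (R : pzRingType) (star : R -> R) (a x : R) : Prop :=
  [/\ star (a * x) = a * x, a * x ^+ 2 = x & x * a ^+ 2 = a].

Definition core_invertible (R : pzRingType) (star : R -> R) (a : R) : Prop :=
  exists x, is_core_inverse star a x.

Definition lann (R : pzRingType) (a : R) : R -> Prop := fun x => x * a = 0.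

(* Main.v *)
Require Import Defs.
From mathcomp Require Import all_boot all_order all_algebra.
Import GRing.Theory.
Local Open Scope ring_scope.
Set Warnings "-notation-overridden".

Section S.
Variables (R : pzRingType) (star : R -> R).
Hypothesis Hs : is_involution star.

Lemma starK x : star (star x) = x. Proof. by case: Hs. Qed.
Lemma starM x y : star (x * y) = star y * star x. Proof. by case: Hs. Qed.
Lemma starD x y : star (x + y) = star x + star y. Proof. by case: Hs. Qed.
Lemma star0 : star 0 = 0.
Proof. have := starD 0 0; rewrite addr0 => h. apply: (addrI (star 0)). by rewrite addr0 -h. Qed.
Lemma starN y : star (- y) = - star y.
Proof. have := starD y (-y); rewrite subrr star0 => h.
apply/eqP; rewrite -subr_eq0 opprK addrC -h. by []. Qed.
Lemma star1 : star 1 = 1.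
Proof. have h := starM (star 1) 1. rewrite mulr1 !starK mulr1 in h. by rewrite -h. Qed.

Lemma core_props a x : is_core_inverse star a x ->
  a * x * a = a /\ x * a * x = x.
Proof.
case=> _ h1 h2.
have axa : a * x * a = a.
  have e : (a * x ^+ 2) * a ^+ 2 = a * x * (x * a ^+ 2) by rewrite !expr2 !mulrA.
  by rewrite h2 h1 in e; rewrite -e h2.
split=> //.
have e : (x * a ^+ 2) * x ^+ 2 = x * a * (a * x ^+ 2) by rewrite !expr2 !mulrA.
by rewrite h1 h2 in e; rewrite -e h1.
Qed.

Lemma core_unique a x z : is_core_inverse star a x -> is_core_inverse star a z -> x = z.
Proof.
move=> hx hz; have [axa xax] := core_props _ _ hx; have [aza zaz] := core_props _ _ hz.
case: hx => sx x1 x2; case: hz => sz z1 z2.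
have e1 : a * x = a * z * (a * x) by rewrite !mulrA aza.
have e2 : a * z = a * x * (a * z) by rewrite !mulrA axa.
have exz : a * x = a * z.
  by rewrite e2 -sx -sz -starM -e1 sx.
have f1 : z * a * (x * a) = z * a by rewrite -!mulrA (mulrA a x a) axa.
have f2 : z * a * (x * a) = x * a.
  have e : (z * a ^+ 2) * (x ^+ 2 * a) = z * a * (a * x ^+ 2 * a) by rewrite !expr2 !mulrA.
  by rewrite x1 z2 mulrA x1 in e; rewrite -e.
have exa : x * a = z * a by rewrite -f2 f1.
by rewrite -xax exa -mulrA exz mulrA zaz.
Qed.

Lemma l13 a s : star a = star a * a * s -> star (a * s) = a * s /\ a * s * a = a.
Proof.
move=> h.
have e1 : star (a * s) = star s * star a * a * s by rewrite starM {1}h !mulrA.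
have e2 : star (a * s) = a * s.
  by rewrite -[a * s]starK e1 !starM !starK !mulrA -e1.
split=> //.
have e3 : a = star s * star a * a by rewrite -{1}[a]starK {1}h !starM !starK mulrA.
by rewrite -e2 starM -e3.
Qed.

Lemma back a b w m : b * a = 0 -> (a ^+ m.+2 + star b * b) * w = 1 ->
  w * (a ^+ m.+2 + star b * b) = 1 -> is_core_inverse star a (a ^+ m.+1 * w).
Proof.
move=> hb huw hwu.
have h0 : star a * star b = 0 by rewrite -starM hb star0.
have hs : star a = star a * a * (a ^+ m.+1 * w).
  rewrite -{1}[star a]mulr1 -huw mulrA mulrDr mulrA h0 mul0r addr0.
  by rewrite exprS !mulrA.
have [sx axa] := l13 _ _ hs.
have wa : w * a ^+ m.+1 * a * a = a.
  have e : w * (a ^+ m.+2 + star b * b) * a = a by rewrite hwu mul1r.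
  rewrite mulrDr mulrDl -(mulrA w (star b * b) a) -(mulrA (star b) b a) hb !mulr0 addr0 in e.
  by rewrite -[RHS]e (exprSr a m.+1) !mulrA.
move: (w * a ^+ m.+1) wa => y ya.
have ea : a ^+ m.+1 = y * a * a ^+ m.+1.
  by rewrite {1}exprS -{1}ya exprS -(mulrA (y * a) a).
have ex : a ^+ m.+1 * w = y * a * (a ^+ m.+1 * w) by rewrite {1}ea -mulrA.
have ex2 : a ^+ m.+1 * w = a * (a ^+ m * w) by rewrite exprS mulrA.
move: (a ^+ m.+1 * w) sx axa ex ex2 => x sx axa ex ex2.
split=> //.
  by rewrite expr2 mulrA {2}ex2 !mulrA axa -mulrA -ex2.
by rewrite {1}ex expr2 mulrA -(mulrA y a x) -(mulrA y (a * x) a) axa ya.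
Qed.

Lemma fwd a x m : is_core_inverse star a x ->
  exists b, b * a = 0 /\ invertible (a ^+ m.+1 + star b * b).
Proof.
move=> hx; have [axa xax] := core_props _ _ hx; case: hx => sx h1 h2.
have axxy y : a * x * (x * y) = x * y by rewrite mulrA -(mulrA a) -expr2 h1.
have xaay y : x * a * (a * y) = a * y by rewrite mulrA -(mulrA x) -expr2 h2.
have AX k : a ^+ k.+1 * x ^+ k.+1 = a * x.
  elim: k => [|k IH]; first by rewrite !expr1.
  by rewrite (exprSr a k.+1) (exprS x k.+1) -mulrA (mulrA a x) (exprS x k) axxy -exprS.
have XA k : x ^+ k.+1 * a ^+ k.+1 = x * a.
  elim: k => [|k IH]; first by rewrite !expr1.
  by rewrite (exprSr x k.+1) (exprS a k.+1) -mulrA (mulrA x a) (exprS a k) xaay -exprS.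
have Pa : (1 - a * x) * a = 0 by rewrite mulrBl mul1r axa subrr.
have Px : (1 - a * x) * x = 0 by rewrite mulrBl mul1r -mulrA -expr2 h1 subrr.
have aQ : a * (1 - x * a) = 0 by rewrite mulrBr mulr1 mulrA axa subrr.
have xP : x * (1 - a * x) = 0 by rewrite mulrBr mulr1 mulrA xax subrr.
have Qa : (1 - x * a) * a = 0 by rewrite mulrBl mul1r -mulrA -expr2 h2 subrr.
have PP : (1 - a * x) * (1 - a * x) = 1 - a * x by rewrite mulrBr mulr1 mulrA Pa mul0r subr0.
have PQ : (1 - a * x) * (1 - x * a) = 1 - a * x by rewrite mulrBr mulr1 mulrA Px mul0r subr0.
have QP : (1 - x * a) * (1 - a * x) = 1 - x * a by rewrite mulrBr mulr1 mulrA Qa mul0r subr0.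
have sP : star (1 - a * x) = 1 - a * x by rewrite starD starN star1 sx.
have AQ : a ^+ m.+1 * (1 - x * a) = 0 by rewrite exprSr -mulrA aQ mulr0.
have PA : (1 - a * x) * a ^+ m.+1 = 0 by rewrite exprS mulrA Pa mul0r.
have QA : (1 - x * a) * a ^+ m.+1 = 0 by rewrite exprS mulrA Qa mul0r.
have PX : (1 - a * x) * x ^+ m.+1 = 0 by rewrite exprS mulrA Px mul0r.
have XP : x ^+ m.+1 * (1 - a * x) = 0 by rewrite exprSr -mulrA xP mulr0.
exists (1 - a * x); split=> //.
exists (x ^+ m.+1 + (1 - x * a) * (1 - a * x)); rewrite sP PP; split.
  rewrite mulrDl (mulrDr (a ^+ m.+1) (x ^+ m.+1)) (mulrDr (1 - a * x) (x ^+ m.+1)) AX (mulrA (a ^+ m.+1)) AQ mul0r PX (mulrA (1 - a * x) (1 - x * a)) PQ PP.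
  by rewrite add0r addr0 addrC subrK.
by rewrite mulrDl (mulrDr (x ^+ m.+1) (a ^+ m.+1)) (mulrDr ((1 - x * a) * (1 - a * x)) (a ^+ m.+1)) XA XP QP QA QP add0r addr0 addrC subrK.
Qed.
End S.

Theorem corollary2p9 (R : pzRingType) (star : R -> R) (Hstar : is_involution star)
    (a : R) (n : nat) (hn : (2 <= n)%N) :
  (core_invertible star a <->
     exists b, lann a b /\ invertible (a ^+ n + star b * b))
  /\
  (forall b uinv x, lann a b -> is_inverse (a ^+ n + star b * b) uinv ->
     is_core_inverse star a x -> x = a ^+ n.-1 * uinv).
Proof.
case: n hn => [|[|m]] // _ /=.
split; first split.
- case=> x hx; have [b hb] := @fwd _ _ Hstar _ _ m.+1 hx; by exists b.
- case=> b [hb [w [h1 h2]]]; exists (a ^+ m.+1 * w). exact: (@back _ _ Hstar _ _ _ _ hb h1 h2).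
move=> b w x hb [h1 h2] hx.
exact: (@core_unique _ _ Hstar _ _ _ hx (@back _ _ Hstar _ _ _ _ hb h1 h2)).
Qed.
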